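(* Let $\tilde{\mathcal L}^{\tau,\sigma_1}$ be the real Lie algebra of formal Laurent series $\xi(\lambda)=\sum_{j\le n_0}\xi_j\lambda^j$ (for some integer $n_0$ depending on $\xi$) such that $\xi_j\in\mathfrak k_1$ for $j$ even and $\xi_j\in\mathfrak p_1$ for $j$ odd, with bracket $[\sum_i\xi_i\lambda^i,\sum_j\eta_j\lambda^j]=\sum_k\big(\sum_{i+j=k}[\xi_i,\eta_j]\big)\lambda^k$. Define $$\tilde{\mathcal L}^{\tau,\sigma_1}_+=\Big\{\xi\in\tilde{\mathcal L}^{\tau,\sigma_1}:\ \xi_{-j}=\sigma_2(\xi_j)\ \text{for all } j,\ \ \xi(1):=\textstyle\sum_j\xi_j\in\mathfrak k_2'\Big\},$$ $$\tilde{\mathcal L}^{\tau,\sigma_1}_-=\Big\{\xi\in\tilde{\mathcal L}^{\tau,\sigma_1}:\ \xi_j=0\ \text{for } j>0,\ \xi_0\in\mathfrak k_1'\Big\}.$$ (Elements of $\tilde{\mathcal L}^{\tau,\sigma_1}_+$ are Laurent polynomials, so $\xi(1)$ is a finite sum.) Then $\tilde{\mathcal L}^{\tau,\sigma_1}_+$ and $\tilde{\mathcal L}^{\tau,\sigma_1}_-$ are Lie subalgebras of $\tilde{\mathcal L}^{\tau,\sigma_1}$ and $\tilde{\mathcal L}^{\tau,\sigma_1}=\tilde{\mathcal L}^{\tau,\sigma_1}_+\oplus\tilde{\mathcal L}^{\tau,\sigma_1}_-$ as a direct sum of vector spaces; i.e., every $A\in\tilde{\mathcal L}^{\tau,\sigma_1}$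 can be written uniquely as $A=\xi+\eta$ with $\xi\in\tilde{\mathcal L}^{\tau,\sigma_1}_+$, $\eta\in\tilde{\mathcal L}^{\tau,\sigma_1}_-$.
   Context: Let $\mathfrak g$ be a complex simple Lie algebra, $\tau$ a conjugate-linear involution of $\mathfrak g$, and $\sigma_1,\sigma_2$ complex-linear involutions of $\mathfrak g$, the three involutions pairwise commuting. Let $\mathfrak u=\{x\in\mathfrak g:\tau(x)=x\}$. For $i=1,2$ let $\mathfrak k_i=\{x\in\mathfrak u:\sigma_i(x)=x\}$ and $\mathfrak p_i=\{x\in\mathfrak u:\sigma_i(x)=-x\}$, so $\mathfrak u=\mathfrak k_i\oplus\mathfrak p_i$. Put $\mathfrak q_1=\mathfrak k_1\cap\mathfrak p_2$ and $\mathfrak q_2=\mathfrak k_2\cap\mathfrak p_1$. Assume: $\mathfrak k_1\cap\mathfrak k_2=\mathfrak s_1\oplus\mathfrak s_2$ for ideals $\mathfrak s_1,\mathfrak s_2$ of $\mathfrak k_1\cap\mathfrak k_2$; the subspaces $\mathfrak k_1':=\mathfrak s_2\oplus\mathfrak q_1$ and $\mathfrak k_2':=\mathfrak s_1\oplus\mathfrak q_2$ are Lie subalgebras; and $\mathfrak k_1=\mathfrak s_1\oplus\mathfrak k_1'$, $\mathfrak k_2=\mathfrak k_2'\oplus\mathfrak s_2$ as direct sums of Lie algebras (these are the Lie algebra versions of $K_1\cap K_2=S_1\times S_2$, $K_1=S_1\times K_1'$, $K_2=K_2'\times S_2$). *)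

(* Defs.v *)
From HB Require Import structures.
From mathcomp Require Import all_boot all_order all_algebra.
Set Implicit Arguments. Unset Strict Implicit. Unset Printing Implicit Defensive.
Import Order.TTheory GRing.Theory Num.Theory.
Local Open Scope ring_scope.

Definition nat_of_int (z : int) : nat :=
  match z with Posz n => n | Negz _ => 0%N end.

Section Defs.
Variables (C : numClosedFieldType) (V : vectType C).

Definition is_lie_bracket (br : V -> V -> V) : Prop :=
  [/\ (forall (a : C) x y z, br (a *: x + y) z = a *: br x z + br y z),
      (forall (a : C) x y z, br z (a *: x + y) = a *: br z x + br z y),
      (forall x, br x x = 0) &
      (forall x y z, br x (br y z) + br y (br z x) + br z (br x y) = 0)].

Definition is_simple_lie (br : V -> V -> V) : Prop :=
  (exists x y, br x y != 0) /\
  (forall I : {vspace V}, (forall x y, y \in I -> br x y \in I) ->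
     I = 0%VS \/ I = fullv).

Definition conj_lin_involution (br : V -> V -> V) (t : V -> V) : Prop :=
  [/\ (forall (a : C) x y, t (a *: x + y) = a^* *: t x + t y),
      (forall x y, t (br x y) = br (t x) (t y)) &
      (forall x, t (t x) = x)].

Definition lin_involution (br : V -> V -> V) (s : V -> V) : Prop :=
  [/\ (forall (a : C) x y, s (a *: x + y) = a *: s x + s y),
      (forall x y, s (br x y) = br (s x) (s y)) &
      (forall x, s (s x) = x)].

Definition real_subspace (S : V -> Prop) : Prop :=
  [/\ S 0, (forall x y, S x -> S y -> S (x + y)) &
      (forall (a : C) x, a \is Num.real -> S x -> S (a *: x))].

Variables (br : V -> V -> V) (tau sig1 sig2 : V -> V) (s1 s2 : V -> Prop).

Definition uu (x : V) : Prop := tau x = x.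
Definition kk1 (x : V) : Prop := uu x /\ sig1 x = x.
Definition pp1 (x : V) : Prop := uu x /\ sig1 x = - x.
Definition kk2 (x : V) : Prop := uu x /\ sig2 x = x.
Definition pp2 (x : V) : Prop := uu x /\ sig2 x = - x.
Definition qq1 (x : V) : Prop := kk1 x /\ pp2 x.
Definition qq2 (x : V) : Prop := kk2 x /\ pp1 x.
Definition kk1' (x : V) : Prop := exists a b, s2 a /\ qq1 b /\ x = a + b.
Definition kk2' (x : V) : Prop := exists a b, s1 a /\ qq2 b /\ x = a + b.

(* formal Laurent series sum_{j <= n0} xi_j lambda^j, as coefficient maps *)
Definition vanish_above (n : int) (xi : int -> V) : Prop :=
  forall j, n < j -> xi j = 0.

Definition Ltilde (xi : int -> V) : Prop :=
  (exists n0 : int, vanish_above n0 xi) /\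
  (forall j, if odd (absz j) then pp1 (xi j) else kk1 (xi j)).

(* bracket of Laurent series: for xi vanishing above n and eta vanishing above
   m, coefficient k is sum_{i+j=k} [xi_i, eta_j], i.e. the (finite) sum over
   i = n, n-1, ..., k-m (all other terms vanish). *)
Definition lbr (n m : int) (xi eta : int -> V) : int -> V :=
  fun k => \sum_(t < nat_of_int (n + m - k + 1))
             br (xi (n - t%:Z)) (eta (k - n + t%:Z)).

(* xi(1) = sum_{j=-n}^{n} xi_j, for a Laurent polynomial vanishing outside [-n,n] *)
Definition eval1 (n : nat) (xi : int -> V) : V :=
  \sum_(t < (n.*2).+1) xi (n%:Z - t%:Z).

Definition Lplus (xi : int -> V) : Prop :=
  [/\ Ltilde xi,
      (forall j, xi (- j) = sig2 (xi j)) &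
      (exists n : nat, vanish_above n%:Z xi /\ kk2' (eval1 n xi))].

Definition Lminus (xi : int -> V) : Prop :=
  [/\ Ltilde xi, (forall j, 0 < j -> xi j = 0) & kk1' (xi 0)].

Definition loop_subalgebra (P : (int -> V) -> Prop) : Prop :=
  [/\ (forall xi, P xi -> Ltilde xi),
      P (fun _ => 0),
      (forall xi eta, P xi -> P eta -> P (fun j => xi j + eta j)),
      (forall (a : C) xi, a \is Num.real -> P xi -> P (fun j => a *: xi j)) &
      (forall xi eta n m, P xi -> P eta -> vanish_above n xi ->
         vanish_above m eta -> P (lbr n m xi eta))].

End Defs.

(* Main.v *)
Require Import Defs.
From HB Require Import structures.
From mathcomp Require Import all_boot all_order all_algebra.
Set Implicit Arguments. Unset Strict Implicit. Unset Printing Implicit Defensive.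
Import Order.TTheory GRing.Theory Num.Theory.
Local Open Scope ring_scope.

Section Aux.
Variables (C : numClosedFieldType) (V : vectType C).
Implicit Types (P Q : V -> Prop) (f : V -> V).

Definition linf (f : V -> V) := forall (a : C) x y, f (a *: x + y) = a *: f x + f y.

Lemma linf0 f : linf f -> f 0 = 0.
Proof.
move=> h; have := h 1 0 0; rewrite !scale1r addr0 => e.
by have := congr1 (fun v => v - f 0) e; rewrite /= subrr addrK => e1; rewrite -e1.
Qed.
Lemma linfD f : linf f -> forall x y, f (x + y) = f x + f y.
Proof. by move=> h x y; have := h 1 x y; rewrite !scale1r. Qed.
Lemma linfZ f : linf f -> forall a x, f (a *: x) = a *: f x.
Proof. by move=> h a x; rewrite -(addr0 (a *: x)) h (linf0 h) addr0. Qed.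
Lemma linfN f : linf f -> forall x, f (- x) = - f x.
Proof. by move=> h x; rewrite -scaleN1r linfZ // scaleN1r. Qed.
Lemma linfB f : linf f -> forall x y, f (x - y) = f x - f y.
Proof. by move=> h x y; rewrite linfD // linfN. Qed.
Lemma linf_sum f (I : Type) (r : seq I) (P : pred I) (F : I -> V) : linf f ->
  f (\sum_(i <- r | P i) F i) = \sum_(i <- r | P i) f (F i).
Proof. by move=> h; apply: (big_morph f (linfD h) (linf0 h)). Qed.

Definition clinf (f : V -> V) := forall (a : C) x y, f (a *: x + y) = a^* *: f x + f y.
Lemma clinf0 f : clinf f -> f 0 = 0.
Proof.
move=> h; have := h 1 0 0; rewrite conjC1 !scale1r addr0 => e.
by have := congr1 (fun v => v - f 0) e; rewrite /= subrr addrK => e1; rewrite -e1.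
Qed.
Lemma clinf_linf_real f : clinf f -> forall a x, a \is Num.real -> f (a *: x) = a *: f x.
Proof.
by move=> h a x ra; rewrite -(addr0 (a *: x)) h (clinf0 h) addr0 conj_Creal.
Qed.
Lemma clinfD f : clinf f -> forall x y, f (x + y) = f x + f y.
Proof. by move=> h x y; have := h 1 x y; rewrite conjC1 !scale1r. Qed.
Lemma clinf_sum f (I : Type) (r : seq I) (P : pred I) (F : I -> V) : clinf f ->
  f (\sum_(i <- r | P i) F i) = \sum_(i <- r | P i) f (F i).
Proof. by move=> h; apply: (big_morph f (clinfD h) (clinf0 h)). Qed.

Lemma rsN P : real_subspace P -> forall x, P x -> P (- x).
Proof. by case=> _ _ h x px; rewrite -scaleN1r; apply: h => //; rewrite realN real1. Qed.
Lemma rsB P : real_subspace P -> forall x y, P x -> P y -> P (x - y).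
Proof. move=> h x y px py; case: (h) => _ hD _; apply: hD => //; exact: rsN. Qed.
Lemma rs0 P : real_subspace P -> P 0.
Proof. by case. Qed.
Lemma rsD P : real_subspace P -> forall x y, P x -> P y -> P (x + y).
Proof. by case. Qed.
Lemma rsZ P : real_subspace P -> forall a x, a \is Num.real -> P x -> P (a *: x).
Proof. by case. Qed.
Lemma rs_sum P (I : Type) (r : seq I) (Q : pred I) (F : I -> V) : real_subspace P ->
  (forall i, Q i -> P (F i)) -> P (\sum_(i <- r | Q i) F i).
Proof. by move=> h hF; apply: big_ind => //; [exact: rs0|exact: rsD]. Qed.

Lemma rsI P Q : real_subspace P -> real_subspace Q -> real_subspace (fun x => P x /\ Q x).
Proof.
move=> hP hQ; split; first by split; apply: rs0.
- by move=> x y [? ?] [? ?]; split; apply: rsD.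
- by move=> a x ra [? ?]; split; apply: rsZ.
Qed.
Lemma rsS P Q : real_subspace P -> real_subspace Q ->
  real_subspace (fun x => exists a b, P a /\ Q b /\ x = a + b).
Proof.
move=> hP hQ; split.
- by exists 0, 0; rewrite addr0; split; [apply: rs0|split; [apply: rs0|]].
- move=> x y [a [b [pa [qb ->]]]] [a' [b' [pa' [qb' ->]]]].
  exists (a + a'), (b + b'); split; first exact: rsD.
  split; first exact: rsD.
  by rewrite addrACA.
- move=> c x rc [a [b [pa [qb ->]]]]; exists (c *: a), (c *: b).
  by split; [apply: rsZ|split; [apply: rsZ|rewrite scalerDr]].
Qed.
Lemma rs_fix f : linf f -> real_subspace (fun x => f x = x).
Proof.
move=> h; split; first exact: linf0.
- by move=> x y ex ey; rewrite linfD // ex ey.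
- by move=> a x _ e; rewrite linfZ // e.
Qed.
Lemma rs_afix f : linf f -> real_subspace (fun x => f x = - x).
Proof.
move=> h; split; first by rewrite linf0 // oppr0.
- by move=> x y ex ey; rewrite linfD // ex ey opprD.
- by move=> a x _ e; rewrite linfZ // e scalerN.
Qed.
Lemma rs_cfix f : clinf f -> real_subspace (fun x => f x = x).
Proof.
move=> h; split; first exact: clinf0.
- by move=> x y ex ey; rewrite clinfD // ex ey.
- by move=> a x ra e; rewrite clinf_linf_real // e.
Qed.
End Aux.
Lemma oddzS (z : int) : odd (absz (z + 1)) = ~~ odd (absz z).
Proof. case: z => [n|[|n]] //=; first by rewrite addn1. by rewrite subn1 /= negbK. Qed.
Lemma oddzP1 (z : int) : odd (absz (z - 1)) = ~~ odd (absz z).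
Proof. by have := oddzS (z - 1); rewrite subrK => ->; rewrite negbK. Qed.
Lemma odd_addz (a b : int) : odd (absz (a + b)) = odd (absz a) (+) odd (absz b).
Proof.
elim/int_rect: b => [|n IH|n IH]; first by rewrite addr0 addbF.
- by rewrite -addn1 PoszD addrA oddzS IH /= addn1 /= addbN.
- have -> : (n.+1%:Z) = n%:Z + 1 by rewrite -addn1 PoszD.
  rewrite opprD addrA oddzP1 IH abszN -opprD abszN -PoszD /= addn1 /=.
  by rewrite addbN.
Qed.

Definition dw (n : int) (L : nat) : seq int := [seq n - t%:Z | t <- iota 0 L].

Lemma mem_dw n L j : (j \in dw n L) = (j <= n) && (n - j < L%:Z).
Proof.
apply/mapP/andP => [[t]|[h1 h2]].
- rewrite mem_iota add0n => /andP[_ ht] ->; split.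
    by rewrite lerBlDr lerDl.
  by rewrite opprB addrC subrK ltz_nat.
- exists (absz (n - j)); last by rewrite gez0_abs ?subr_ge0 // opprB addrC subrK.
  rewrite mem_iota add0n /=; rewrite -ltz_nat gez0_abs // subr_ge0 //.
Qed.

Lemma uniq_dw n L : uniq (dw n L).
Proof.
rewrite map_inj_uniq ?iota_uniq // => a b /= /eqP.
by rewrite (inj_eq (addrI _)) (inj_eq oppr_inj) => /eqP [].
Qed.

Lemma mem_dwS (N : nat) j : (j \in dw N (N.*2).+1) = (j <= N) && (- (N%:Z) <= j).
Proof.
rewrite mem_dw; congr (_ && _).
rewrite -addn1 PoszD ltzD1 -addnn PoszD lerBlDl -lerBlDr opprD addrA subrr add0r.
by [].
Qed.

Lemma big_dw (V : nmodType) n L (G : int -> V) :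
  \sum_(t < L) G (n - t%:Z) = \sum_(j <- dw n L) G j.
Proof. by rewrite big_map -(big_mkord xpredT (fun t => G (n - t%:Z))) /index_iota subn0. Qed.

Lemma sum_supp (V : zmodType) (F : int -> V) s s' : uniq s -> uniq s' ->
  (forall j, F j != 0 -> j \in s) -> (forall j, F j != 0 -> j \in s') ->
  \sum_(j <- s) F j = \sum_(j <- s') F j.
Proof.
have E r : \sum_(j <- r) F j = \sum_(j <- [seq j <- r | F j != 0]) F j.
  by rewrite big_filter [RHS]big_mkcond; apply: eq_bigr => j _; case: eqP.
move=> us us' hs hs'; rewrite E (E s'); apply: perm_big.
apply: uniq_perm; rewrite ?filter_uniq // => j; rewrite !mem_filter.
by case: (boolP (F j != 0)) => //= /[dup] /hs -> /hs' ->.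
Qed.
Section Main.
Variables (C : numClosedFieldType) (V : vectType C).
Variables (br : V -> V -> V) (tau sig1 sig2 : V -> V) (s1 s2 : V -> Prop).
Variable Hbr : is_lie_bracket br.
Variable Htau : conj_lin_involution br tau.
Variable Hsig1 : lin_involution br sig1.
Variable Hsig2 : lin_involution br sig2.
Variable Hc1 : forall x, tau (sig1 x) = sig1 (tau x).
Variable Hc2 : forall x, tau (sig2 x) = sig2 (tau x).
Variable Hc12 : forall x, sig1 (sig2 x) = sig2 (sig1 x).
Variable Hs1sub : real_subspace s1.
Variable Hs2sub : real_subspace s2.
Variable Hk1'sub : forall x y, kk1' tau sig1 sig2 s2 x -> kk1' tau sig1 sig2 s2 y ->
               kk1' tau sig1 sig2 s2 (br x y).
Variable Hs1in : forall x, s1 x -> kk1 tau sig1 x /\ kk2 tau sig2 x.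
Variable Hs2in : forall x, s2 x -> kk1 tau sig1 x /\ kk2 tau sig2 x.
Variable Hk12span : forall x, kk1 tau sig1 x -> kk2 tau sig2 x ->
                exists a b, s1 a /\ s2 b /\ x = a + b.
Variable Hk12dir : forall x, s1 x -> s2 x -> x = 0.
Variable Hk1span : forall x, kk1 tau sig1 x ->
               exists a b, s1 a /\ kk1' tau sig1 sig2 s2 b /\ x = a + b.
Variable Hk1dir : forall x, s1 x -> kk1' tau sig1 sig2 s2 x -> x = 0.
Variable Hk2span : forall x, kk2 tau sig2 x ->
               exists a b, kk2' tau sig1 sig2 s1 a /\ s2 b /\ x = a + b.
Variable Hk2dir : forall x, kk2' tau sig1 sig2 s1 x -> s2 x -> x = 0.
Variable Hk2'sub : forall x y, kk2' tau sig1 sig2 s1 x -> kk2' tau sig1 sig2 s1 y ->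
               kk2' tau sig1 sig2 s1 (br x y).

Local Notation uu := (uu tau).
Local Notation kk1 := (kk1 tau sig1).
Local Notation pp1 := (pp1 tau sig1).
Local Notation kk2 := (kk2 tau sig2).
Local Notation pp2 := (pp2 tau sig2).
Local Notation qq1 := (qq1 tau sig1 sig2).
Local Notation qq2 := (qq2 tau sig1 sig2).
Local Notation kk1' := (kk1' tau sig1 sig2 s2).
Local Notation kk2' := (kk2' tau sig1 sig2 s1).
Local Notation Ltilde := (Ltilde tau sig1).

Lemma brl z : linf (fun x => br x z).
Proof. by case: Hbr => h _ _ _ a x y; apply: h. Qed.
Lemma brr z : linf (br z).
Proof. by case: Hbr => _ h _ _ a x y; apply: h. Qed.
Lemma br0l z : br 0 z = 0. Proof. exact: (linf0 (brl z)). Qed.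
Lemma br0r z : br z 0 = 0. Proof. exact: (linf0 (brr z)). Qed.
Lemma lsig1 : linf sig1. Proof. by case: Hsig1. Qed.
Lemma lsig2 : linf sig2. Proof. by case: Hsig2. Qed.
Lemma ctau : clinf tau. Proof. by case: Htau. Qed.
Lemma sig2K x : sig2 (sig2 x) = x. Proof. by case: Hsig2. Qed.
Lemma sig2br x y : sig2 (br x y) = br (sig2 x) (sig2 y). Proof. by case: Hsig2. Qed.
Lemma sig1br x y : sig1 (br x y) = br (sig1 x) (sig1 y). Proof. by case: Hsig1. Qed.
Lemma taubr x y : tau (br x y) = br (tau x) (tau y). Proof. by case: Htau. Qed.

Lemma rs_uu : real_subspace uu. Proof. exact: (rs_cfix ctau). Qed.
Lemma rs_kk1 : real_subspace kk1. Proof. exact: (rsI rs_uu (rs_fix lsig1)). Qed.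
Lemma rs_pp1 : real_subspace pp1. Proof. exact: (rsI rs_uu (rs_afix lsig1)). Qed.
Lemma rs_kk2 : real_subspace kk2. Proof. exact: (rsI rs_uu (rs_fix lsig2)). Qed.
Lemma rs_pp2 : real_subspace pp2. Proof. exact: (rsI rs_uu (rs_afix lsig2)). Qed.
Lemma rs_qq1 : real_subspace qq1. Proof. exact: (rsI rs_kk1 rs_pp2). Qed.
Lemma rs_qq2 : real_subspace qq2. Proof. exact: (rsI rs_kk2 rs_pp1). Qed.
Lemma rs_kk1' : real_subspace kk1'. Proof. exact: (rsS Hs2sub rs_qq1). Qed.
Lemma rs_kk2' : real_subspace kk2'. Proof. exact: (rsS Hs1sub rs_qq2). Qed.

Definition cls (b : bool) x := if b then pp1 x else kk1 x.
Lemma rs_cls b : real_subspace (cls b).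
Proof. by case: b; [exact: rs_pp1|exact: rs_kk1]. Qed.

Lemma cls_br b c x y : cls b x -> cls c y -> cls (b (+) c) (br x y).
Proof.
have hN z w : br (- z) w = - br z w by rewrite (linfN (brl w)).
have hN' z w : br z (- w) = - br z w by rewrite (linfN (brr z)).
case: b; case: c => /= -[ux sx] [uy sy];
  (split; [by rewrite /Defs.uu taubr ux uy|rewrite sig1br sx sy ?hN ?hN' ?opprK //]).
Qed.

Lemma cls_sig2 b x : cls b x -> cls b (sig2 x).
Proof.
case: b => -[ux sx]; (split; [by rewrite /Defs.uu Hc2 ux|]); rewrite Hc12 sx //.
by rewrite (linfN lsig2).
Qed.

Lemma Ltilde_cls xi : Ltilde xi -> forall j, cls (odd (absz j)) (xi j).
Proof. by case=> _ h j; move: (h j); rewrite /cls; case: (odd _). Qed.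

Lemma cls_Ltilde xi n : vanish_above n xi -> (forall j, cls (odd (absz j)) (xi j)) -> Ltilde xi.
Proof. by move=> hv h; split; [exists n|move=> j; move: (h j); rewrite /cls; case: (odd _)]. Qed.


Lemma nat_of_intK z : 0 <= z -> (nat_of_int z)%:Z = z.
Proof. by case: z. Qed.
Lemma nat_of_int_le0 z : z <= 0 -> nat_of_int z = 0%N.
Proof. by case: z => [[|p]|p]. Qed.

Lemma lbr_full n m xi eta k (s : seq int) : vanish_above n xi -> vanish_above m eta ->
  uniq s -> (forall i, xi i != 0 -> eta (k - i) != 0 -> i \in s) ->
  lbr br n m xi eta k = \sum_(i <- s) br (xi i) (eta (k - i)).
Proof.
move=> hn hm us hs; rewrite /lbr.
transitivity (\sum_(t < nat_of_int (n + m - k + 1))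
   br (xi (n - t%:Z)) (eta (k - (n - t%:Z)))).
  by apply: eq_bigr => t _; rewrite opprB addrCA addrC.
rewrite (@big_dw _ n _ (fun i => br (xi i) (eta (k - i)))).
apply: sum_supp => //; first exact: uniq_dw.
move=> i hi.
have hx : xi i != 0 by apply: contraNneq hi => ->; rewrite br0l.
have he : eta (k - i) != 0 by apply: contraNneq hi => ->; rewrite br0r.
have hin : i <= n by rewrite leNgt; apply: contraNN hx => /hn ->.
have hkm : k - i <= m by rewrite leNgt; apply: contraNN he => /hm ->.
have hlt : n - i < n + m - k + 1.
  by rewrite ltzD1 -addrA lerD2l lerBrDl.
rewrite mem_dw hin /= nat_of_intK //.
  apply: le_trans (ltW hlt); rewrite subr_ge0 //.
move=> j hj; apply: hs; apply: contraNneq hj => ->; by rewrite ?br0l ?br0r.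
Qed.

Lemma lbr_vanish n m xi eta : vanish_above (n + m) (lbr br n m xi eta).
Proof.
move=> k hk; rewrite /lbr nat_of_int_le0 ?big_ord0 //.
by rewrite lezD1 subr_lt0.
Qed.

Lemma vanish_le n n' (xi : int -> V) : n <= n' -> vanish_above n xi -> vanish_above n' xi.
Proof. by move=> h hv j hj; apply: hv; exact: le_lt_trans h hj. Qed.

Lemma Ltilde0 : Ltilde (fun _ => 0).
Proof. by apply: (@cls_Ltilde _ 0) => // j; apply: rs0; apply: rs_cls. Qed.

Lemma LtildeD xi eta : Ltilde xi -> Ltilde eta -> Ltilde (fun j => xi j + eta j).
Proof.
move=> hx he; case: (hx) => -[n1 h1] _; case: (he) => -[n2 h2] _.
apply: (@cls_Ltilde _ (Order.max n1 n2)).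
  move=> j hj; rewrite gt_max in hj; case/andP: hj => a b.
  by rewrite h1 // h2 // addr0.
by move=> j; apply: rsD; [apply: rs_cls|apply: Ltilde_cls..].
Qed.

Lemma LtildeZ (a : C) xi : a \is Num.real -> Ltilde xi -> Ltilde (fun j => a *: xi j).
Proof.
move=> ra hx; case: (hx) => -[n1 h1] _.
apply: (@cls_Ltilde _ n1); first by move=> j hj; rewrite h1 // scaler0.
by move=> j; apply: rsZ; [apply: rs_cls|done|apply: Ltilde_cls].
Qed.

Lemma Ltilde_lbr n m xi eta : Ltilde xi -> Ltilde eta -> Ltilde (lbr br n m xi eta).
Proof.
move=> hx he; apply: (@cls_Ltilde _ (n + m)); first exact: lbr_vanish.
move=> k; rewrite /lbr; apply: rs_sum; first exact: rs_cls.
move=> t _; move: (t%:Z) => u.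
rewrite {1}(_ : k = (n - u) + (k - n + u)); last first.
  by rewrite addrC -!addrA [u + _]addrC subrK addNr addr0.
rewrite odd_addz; apply: cls_br; exact: Ltilde_cls.
Qed.

Local Notation Lminus := (Lminus tau sig1 sig2 s2).

Lemma Lminus_sub : loop_subalgebra br tau sig1 Lminus.
Proof.
split.
- by move=> ? [].
- by split; [exact: Ltilde0|done|exact: (rs0 rs_kk1')].
- move=> xi eta [hx px kx] [he pe ke]; split; first exact: LtildeD.
    by move=> j hj; rewrite px // pe // addr0.
  exact: (rsD rs_kk1').
- move=> a xi ra [hx px kx]; split; first exact: LtildeZ.
    by move=> j hj; rewrite px // scaler0.
  exact: (rsZ rs_kk1').
- move=> xi eta n m [hx px kx] [he pe ke] hn hm; split; first exact: Ltilde_lbr.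
  + move=> k hk; rewrite (@lbr_full _ _ _ _ _ [::]) ?big_nil // => i hxi hei.
    have hi : i <= 0 by rewrite leNgt; apply: contraNN hxi => /px ->.
    have hki : k - i <= 0 by rewrite leNgt; apply: contraNN hei => /pe ->.
    rewrite subr_le0 in hki.
    by move: (le_trans hki hi); rewrite leNgt hk.
  + rewrite (@lbr_full _ _ _ _ _ [:: 0]) // ?big_seq1 ?subr0; first exact: Hk1'sub.
    move=> i hxi hei.
    have hi : i <= 0 by rewrite leNgt; apply: contraNN hxi => /px ->.
    have hki : 0 - i <= 0 by rewrite leNgt; apply: contraNN hei => /pe ->.
    rewrite subr_le0 in hki.
    by rewrite mem_seq1 eq_le hi hki.
Qed.

Local Notation Lplus := (Lplus tau sig1 sig2 s1).
Local Notation W N := (dw (N%:Z) (N.*2).+1).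

Lemma sym_supp (xi : int -> V) (N : nat) : (forall j, xi (- j) = sig2 (xi j)) ->
  vanish_above N%:Z xi -> forall i, xi i != 0 -> i \in W N.
Proof.
move=> hs hv i hx; rewrite mem_dwS; apply/andP; split.
  by rewrite leNgt; apply: contraNN hx => /hv ->.
rewrite lerNl leNgt; apply: contraNN hx => /hv h.
by rewrite -(opprK i) hs h (linf0 lsig2).
Qed.

Lemma WN_opp (N : nat) i : i \in W N -> - i \in W N.
Proof. by rewrite !mem_dwS lerNl lerN2 andbC. Qed.

Lemma eval_sum (xi : int -> V) (p : nat) (s : seq int) : (forall j, xi (- j) = sig2 (xi j)) ->
  vanish_above p%:Z xi -> uniq s -> (forall i, xi i != 0 -> i \in s) ->
  eval1 p xi = \sum_(j <- s) xi j.
Proof.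
move=> hs hv us hsu; rewrite /eval1 (@big_dw _ p%:Z _ xi).
apply: sum_supp => //; [exact: uniq_dw|exact: sym_supp].
Qed.

Lemma vanish_nat (xi : int -> V) (p N : nat) : (p <= N)%N -> vanish_above p%:Z xi ->
  vanish_above N%:Z xi.
Proof. by move=> h; apply: vanish_le; rewrite lez_nat. Qed.

Lemma eval_conv (xi : int -> V) (p N : nat) : (forall j, xi (- j) = sig2 (xi j)) ->
  vanish_above p%:Z xi -> (p <= N)%N -> eval1 N xi = eval1 p xi.
Proof.
move=> hs hv hpN; have hvN := vanish_nat hpN hv.
rewrite (@eval_sum _ p (W N)) ?uniq_dw //; last exact: sym_supp.
by rewrite (@eval_sum _ N (W N)) ?uniq_dw //; exact: sym_supp.
Qed.

Lemma Lplus_sub : loop_subalgebra br tau sig1 Lplus.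
Proof.
split.
- by move=> ? [].
- split; first exact: Ltilde0.
    by move=> j; rewrite (linf0 lsig2).
  exists 0%N; split => //; rewrite /eval1 big1 //; exact: (rs0 rs_kk2').
- move=> xi eta [hx sx [p [vp kp]]] [he se [q [vq kq]]]; split; first exact: LtildeD.
    by move=> j; rewrite sx se (linfD lsig2).
  exists (maxn p q); split.
    move=> j hj; rewrite (@vanish_nat _ _ (maxn p q) (leq_maxl _ _) vp j hj).
    by rewrite (@vanish_nat _ _ (maxn p q) (leq_maxr _ _) vq j hj) addr0.
  rewrite /eval1 big_split /=.
  rewrite (_ : \sum_(t < _) xi _ = eval1 (maxn p q) xi) //.
  rewrite (_ : \sum_(t < _) eta _ = eval1 (maxn p q) eta) //.
  rewrite (eval_conv sx vp) ?leq_maxl // (eval_conv se vq) ?leq_maxr //.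
  exact: (rsD rs_kk2').
- move=> a xi ra [hx sx [p [vp kp]]]; split; first exact: LtildeZ.
    by move=> j; rewrite sx (linfZ lsig2).
  exists p; split; first by move=> j hj; rewrite vp // scaler0.
  by rewrite /eval1 -scaler_sumr; apply: (rsZ rs_kk2').
- move=> xi eta n m [hx sx [p [vp kp]]] [he se [q [vq kq]]] hn hm.
  set N := maxn p q.
  have vxN : vanish_above N%:Z xi by apply: (vanish_nat _ vp); rewrite leq_maxl.
  have veN : vanish_above N%:Z eta by apply: (vanish_nat _ vq); rewrite leq_maxr.
  have supx := sym_supp sx vxN; have supe := sym_supp se veN.
  have LB k : lbr br n m xi eta k = \sum_(i <- W N) br (xi i) (eta (k - i)).
    by apply: lbr_full => //; [exact: uniq_dw| move=> i h _; exact: supx].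
  split; first exact: Ltilde_lbr.
  + move=> k; rewrite !LB (linf_sum _ _ _ lsig2).
    rewrite [RHS](eq_bigr (fun i => br (xi (- i)) (eta (- k - - i)))); last first.
      move=> i _; rewrite sig2br -sx -se; congr (br _ (eta _)).
      by rewrite opprB opprK addrC.
    rewrite -(big_map (fun i => - i) xpredT (fun i => br (xi i) (eta (- k - i)))).
    apply: sum_supp; [exact: uniq_dw| |move=> i hi|move=> i hi].
    * by rewrite map_inj_uniq ?uniq_dw //; exact: oppr_inj.
    * by apply: supx; apply: contraNneq hi => ->; rewrite br0l.
    * rewrite -(opprK i); apply: map_f; apply: WN_opp; apply: supx.
      by apply: contraNneq hi => ->; rewrite br0l.
  + exists (N + N)%N; split.
      move=> k hk; rewrite LB (@sum_supp _ _ _ [::]) ?big_nil //; first exact: uniq_dw.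
        by move=> i hi; apply: supx; apply: contraNneq hi => ->; rewrite br0l.
      move=> i hi.
      have hxi : xi i != 0 by apply: contraNneq hi => ->; rewrite br0l.
      have hei : eta (k - i) != 0 by apply: contraNneq hi => ->; rewrite br0r.
      move: (supx _ hxi) (supe _ hei); rewrite !mem_dwS => /andP[h1 _] /andP[h2 _].
      by have := lerD h1 h2; rewrite addrC subrK -PoszD leNgt hk.
    rewrite /eval1 (@big_dw _ (N + N)%N%:Z _ (lbr br n m xi eta)).
    rewrite (eq_bigr (fun k => \sum_(i <- W N) br (xi i) (eta (k - i)))); last by move=> k _; apply: LB.
    rewrite exchange_big /=.
    rewrite (eq_bigr (fun i => br (xi i) (\sum_(j <- W N) eta j))); last first.
      move=> i _; rewrite -(linf_sum _ _ _ (brr (xi i))).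
      have [->|hxi] := eqVneq (xi i) 0; first by rewrite !br0l.
      congr (br _ _).
      rewrite -(big_map (fun k => k - i) xpredT eta).
      apply: sum_supp; [|exact: uniq_dw|move=> j hj|exact: supe].
        by rewrite map_inj_uniq ?uniq_dw // => a b /= /addIr.
      rewrite -(addrK i j); apply: (map_f (fun k => k - i)).
      move: (supx _ hxi) (supe _ hj); rewrite !mem_dwS => /andP[h1 h2] /andP[h3 h4].
      by rewrite PoszD opprD (lerD h3 h1) (lerD h4 h2).
    rewrite -(linf_sum _ _ _ (brl _)).
    rewrite -(@eval_sum _ p) ?uniq_dw // -(@eval_sum _ q) ?uniq_dw //.
    exact: Hk2'sub.
Qed.

Lemma s1_kk2' a : s1 a -> kk2' a.
Proof. by move=> h; exists a, 0; split => //; split; [exact: (rs0 rs_qq2)|rewrite addr0]. Qed.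
Lemma s2_kk1' a : s2 a -> kk1' a.
Proof. by move=> h; exists a, 0; split => //; split; [exact: (rs0 rs_qq1)|rewrite addr0]. Qed.

Lemma eval_sig2 (xi : int -> V) (N : nat) : (forall j, xi (- j) = sig2 (xi j)) ->
  vanish_above N%:Z xi -> sig2 (eval1 N xi) = eval1 N xi.
Proof.
move=> hs hv; have sup := sym_supp hs hv.
rewrite (@eval_sum _ N (W N)) ?uniq_dw // (linf_sum _ _ _ lsig2).
rewrite (eq_bigr (fun j => xi (- j))); last by move=> j _; rewrite hs.
rewrite -(big_map (fun j => - j) xpredT xi).
apply: sum_supp; [|exact: uniq_dw| |exact: sup].
  by rewrite map_inj_uniq ?uniq_dw //; exact: oppr_inj.
by move=> j hj; rewrite -(opprK j); apply: (map_f (fun j => - j)); apply: WN_opp; apply: sup.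
Qed.

Lemma nat_of_int_ge z : z <= (nat_of_int z)%:Z.
Proof. by case: z. Qed.

Lemma decomp A : Ltilde A -> exists xi eta, Lplus xi /\ Lminus eta /\ forall j, A j = xi j + eta j.
Proof.
move=> hLA; have hA := Ltilde_cls hLA; case: hLA => -[n0 hv0] _.
set N := nat_of_int n0.
have vN : vanish_above N%:Z A by apply: vanish_le hv0; exact: nat_of_int_ge.
pose xih j := if j == 0 then 0 else if 0 < j then A j else sig2 (A (- j)).
have sh : forall j, xih (- j) = sig2 (xih j).
  move=> j; rewrite /xih oppr_eq0; case: (ltgtP j 0) => [hn|hp|].
  - by rewrite oppr_gt0 hn sig2K.
  - by rewrite oppr_gt0 lt_gtF // opprK.
  - by rewrite (linf0 lsig2).
have vh : vanish_above N%:Z xih.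
  move=> j hj; have hp : 0 < j by apply: le_lt_trans hj.
  by rewrite /xih gt_eqF // hp vN.
have ch : forall j, cls (odd (absz j)) (xih j).
  move=> j; rewrite /xih; case: (ltgtP j 0) => [hn|hp|].
  - by apply: cls_sig2; rewrite -abszN; apply: hA.
  - by [].
  - by move=> ->; apply: rs0; apply: rs_cls.
set c := eval1 N xih.
have kc : kk2 c.
  split; last exact: eval_sig2.
  rewrite /c /eval1; apply: rs_sum; first exact: rs_uu.
  by move=> t _; case: (odd _) (ch (N%:Z - t%:Z)) => -[].
have [a1 [b1 [sa1 [kb1 eA0]]]] := Hk1span (hA 0).
have [c' [c2 [kc' [sc2 ec]]]] := Hk2span kc.
set xi0 := a1 - c2.
have kxi0 : kk1 xi0 by apply: (rsB rs_kk1); [exact: (Hs1in sa1).1|exact: (Hs2in sc2).1].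
have sxi0 : sig2 xi0 = xi0.
  by rewrite (linfB lsig2) (Hs1in sa1).2.2 (Hs2in sc2).2.2.
pose xi j := if j == 0 then xi0 else xih j.
have sx : forall j, xi (- j) = sig2 (xi j).
  move=> j; rewrite /xi oppr_eq0; have [_|_] := eqVneq j 0; first by rewrite sxi0.
  exact: sh.
have vx : vanish_above N%:Z xi.
  move=> j hj; have hp : 0 < j by apply: le_lt_trans hj.
  by rewrite /xi gt_eqF // vh.
have W0 : 0 \in W N by rewrite mem_dwS lerNl oppr0.
exists xi.
exists (fun j => if 0 < j then 0 else if j == 0 then A 0 - xi0 else A j - sig2 (A (- j))).
split; [split|split; [split|]].
- apply: (@cls_Ltilde _ N%:Z) => // j.
  by rewrite /xi; have [->|_] := eqVneq j 0; [exact: kxi0|apply: ch].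
- exact: sx.
- exists N; split => //.
  rewrite (@eval_sum _ N (W N)) ?uniq_dw //; last exact: sym_supp.
  rewrite (eq_bigr (fun j => xih j + (if j == 0 then xi0 else 0))); last first.
    by move=> j _; rewrite /xi /xih; case: (j == 0); rewrite ?add0r ?addr0.
  rewrite big_split /=.
  rewrite -(@eval_sum xih N (W N)) ?uniq_dw //; last exact: sym_supp.
  rewrite (@sum_supp _ _ _ [:: 0]) ?big_seq1 ?eqxx ?uniq_dw //; first last.
    by move=> j; have [->|_] := eqVneq j 0; [rewrite mem_seq1 eqxx|rewrite eqxx].
    by move=> j; have [->|_] := eqVneq j 0; [move=> _; exact: W0|rewrite eqxx].
  rewrite -/c ec /xi0 addrACA subrr addr0.
  by apply: (rsD rs_kk2') => //; exact: s1_kk2'.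
- apply: (@cls_Ltilde _ 0) => j.
    by move=> hj; rewrite hj.
  case: (ltgtP j 0) => [hn|hp|].
  + by apply: (rsB (rs_cls _)); [apply: hA|apply: cls_sig2; rewrite -abszN; apply: hA].
  + by apply: rs0; apply: rs_cls.
  + by move=> ->; apply: (rsB rs_kk1) => //; exact: hA 0.
- by move=> j ->.
- rewrite ltxx eqxx eA0 /xi0 opprB addrC addrA subrK addrC.
  by apply: (rsD rs_kk1') => //; exact: s2_kk1'.
- move=> j; rewrite /xi /xih; case: (ltgtP j 0) => [hn|hp|].
  + by rewrite addrC subrK.
  + by rewrite addr0.
  + by move=> ->; rewrite addrC subrK.
Qed.

Lemma uniq_dec xi xi' eta eta' : Lplus xi -> Lplus xi' -> Lminus eta -> Lminus eta' ->
  (forall j, xi j + eta j = xi' j + eta' j) ->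
  (forall j, xi j = xi' j) /\ (forall j, eta j = eta' j).
Proof.
move=> [hx sx [p [vp kp]]] [hx' sx' [p' [vp' kp']]] [he pe ke] [he' pe' ke'] heq.
have hd : forall j, xi j - xi' j = eta' j - eta j.
  move=> j; rewrite -[xi j](addrK (eta j)) heq addrAC [xi' j + _]addrC addrK.
  by [].
have pos : forall j, 0 < j -> xi j = xi' j.
  by move=> j hj; apply/eqP; rewrite -subr_eq0 hd pe // pe' // subrr.
have d0 : forall j, j != 0 -> xi j = xi' j.
  move=> j hj; case: (ltgtP j 0) => [hn|hp|e]; last by rewrite e eqxx in hj.
    by rewrite -[j]opprK sx sx' pos // oppr_gt0.
  exact: pos.
set N := maxn p p'.
have W0 : 0 \in W N by rewrite mem_dwS lerNl oppr0.
set d := xi 0 - xi' 0.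
have ed : eval1 p xi - eval1 p' xi' = d.
  rewrite -(eval_conv sx vp (leq_maxl p p')) -(eval_conv sx' vp' (leq_maxr p p')).
  have vxN : vanish_above N%:Z xi by apply: (vanish_nat _ vp); rewrite leq_maxl.
  have vxN' : vanish_above N%:Z xi' by apply: (vanish_nat _ vp'); rewrite leq_maxr.
  rewrite (@eval_sum xi N (W N)) ?uniq_dw //; last exact: sym_supp.
  rewrite (@eval_sum xi' N (W N)) ?uniq_dw //; last exact: sym_supp.
  rewrite -sumrB (@sum_supp _ _ _ [:: 0]) ?big_seq1 ?uniq_dw //.
    by move=> j; have [->|hj] := eqVneq j 0; [|rewrite d0 // subrr eqxx].
  by move=> j; have [->|hj] := eqVneq j 0; [rewrite mem_seq1|rewrite d0 // subrr eqxx].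
have kd2' : kk2' d by rewrite -ed; apply: (rsB rs_kk2').
have kd1' : kk1' d by rewrite /d hd; apply: (rsB rs_kk1').
have kd1 : kk1 d.
  by apply: (rsB rs_kk1); [exact: (Ltilde_cls hx 0)|exact: (Ltilde_cls hx' 0)].
have kd2 : kk2 d.
  split; first exact: kd1.1.
  by rewrite /d (linfB lsig2) -sx -sx' oppr0.
have [a [b [sa [sb ed2]]]] := Hk12span kd1 kd2.
have ea : a = 0.
  apply: Hk1dir => //; rewrite (_ : a = d - b); last by rewrite ed2 addrK.
  by apply: (rsB rs_kk1') => //; exact: s2_kk1'.
have dz : d = 0 by apply: Hk2dir => //; rewrite ed2 ea add0r.
have e0 : xi 0 = xi' 0 by apply/eqP; rewrite -subr_eq0 -/d dz.
have exi : forall j, xi j = xi' j.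
  by move=> j; have [->|hj] := eqVneq j 0; [exact: e0|exact: d0].
split => // j; apply: (@addrI _ (xi j)); rewrite heq exi.
by [].
Qed.

End Main.
Theorem mainTheorem2 (C : numClosedFieldType) (V : vectType C)
  (br : V -> V -> V) (tau sig1 sig2 : V -> V) (s1 s2 : V -> Prop)
  (Hbr : is_lie_bracket br) (Hsimple : is_simple_lie br)
  (Htau : conj_lin_involution br tau)
  (Hsig1 : lin_involution br sig1) (Hsig2 : lin_involution br sig2)
  (Hc1 : forall x, tau (sig1 x) = sig1 (tau x))
  (Hc2 : forall x, tau (sig2 x) = sig2 (tau x))
  (Hc12 : forall x, sig1 (sig2 x) = sig2 (sig1 x))
  (* K1 /\ K2 = S1 x S2, with S1, S2 ideals *)
  (Hs1sub : real_subspace s1) (Hs2sub : real_subspace s2)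
  (Hs1in : forall x, s1 x -> kk1 tau sig1 x /\ kk2 tau sig2 x)
  (Hs2in : forall x, s2 x -> kk1 tau sig1 x /\ kk2 tau sig2 x)
  (Hs1id : forall x y, kk1 tau sig1 x -> kk2 tau sig2 x -> s1 y -> s1 (br x y))
  (Hs2id : forall x y, kk1 tau sig1 x -> kk2 tau sig2 x -> s2 y -> s2 (br x y))
  (Hk12span : forall x, kk1 tau sig1 x -> kk2 tau sig2 x ->
                exists a b, s1 a /\ s2 b /\ x = a + b)
  (Hk12dir : forall x, s1 x -> s2 x -> x = 0)
  (* k1' and k2' are Lie subalgebras *)
  (Hk1'sub : forall x y, kk1' tau sig1 sig2 s2 x -> kk1' tau sig1 sig2 s2 y ->
               kk1' tau sig1 sig2 s2 (br x y))
  (Hk2'sub : forall x y, kk2' tau sig1 sig2 s1 x -> kk2' tau sig1 sig2 s1 y ->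
               kk2' tau sig1 sig2 s1 (br x y))
  (* k1 = s1 (+) k1' as Lie algebras *)
  (Hk1span : forall x, kk1 tau sig1 x ->
               exists a b, s1 a /\ kk1' tau sig1 sig2 s2 b /\ x = a + b)
  (Hk1dir : forall x, s1 x -> kk1' tau sig1 sig2 s2 x -> x = 0)
  (Hk1comm : forall a b, s1 a -> kk1' tau sig1 sig2 s2 b -> br a b = 0)
  (* k2 = k2' (+) s2 as Lie algebras *)
  (Hk2span : forall x, kk2 tau sig2 x ->
               exists a b, kk2' tau sig1 sig2 s1 a /\ s2 b /\ x = a + b)
  (Hk2dir : forall x, kk2' tau sig1 sig2 s1 x -> s2 x -> x = 0)
  (Hk2comm : forall a b, kk2' tau sig1 sig2 s1 a -> s2 b -> br a b = 0) :
  loop_subalgebra br tau sig1 (Lplus tau sig1 sig2 s1) /\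
  loop_subalgebra br tau sig1 (Lminus tau sig1 sig2 s2) /\
  (forall A, Ltilde tau sig1 A ->
     exists xi eta, Lplus tau sig1 sig2 s1 xi /\ Lminus tau sig1 sig2 s2 eta /\
       forall j, A j = xi j + eta j) /\
  (forall xi xi' eta eta',
     Lplus tau sig1 sig2 s1 xi -> Lplus tau sig1 sig2 s1 xi' ->
     Lminus tau sig1 sig2 s2 eta -> Lminus tau sig1 sig2 s2 eta' ->
     (forall j, xi j + eta j = xi' j + eta' j) ->
     (forall j, xi j = xi' j) /\ (forall j, eta j = eta' j)).
Proof.
split; [|split; [|split]].
- eapply Lplus_sub; eassumption.
- eapply Lminus_sub; eassumption.
- move=> A hA; eapply decomp; eassumption.
- move=> xi xi' eta eta'; apply: uniq_dec; eassumption.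
Qed.
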